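(* Let $k=\mathbb{Q}(a_1,a_2,a_3,a_4)$ with $a_i$ indeterminates, $P=X^4+a_1X^3+a_2X^2+a_3X+a_4\in k[X]$, and let $Q=b_0X^3+b_1X^2+b_2X+b_3$ be the remainder of the Euclidean division of $P'^2$ by $P$. If $x_1,\dots,x_4$ are the roots of $P$ (in an algebraic closure of $k$), then the three roots of $Q$ are $$\frac{x_1x_2-x_3x_4}{x_1+x_2-x_3-x_4},\quad \frac{x_1x_3-x_2x_4}{x_1+x_3-x_2-x_4},\quad \frac{x_1x_4-x_2x_3}{x_1+x_4-x_2-x_3}.$$
   Context: $P'$ denotes the derivative of $P$ with respect to $X$. *)

(* Defs.v *)
From HB Require Import structures.
From mathcomp Require Import all_boot all_algebra.
From mathcomp Require Import fraction.
From mathcomp Require Import mpoly.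
Set Implicit Arguments. Unset Strict Implicit. Unset Printing Implicit Defensive.
Import GRing.Theory.
Local Open Scope ring_scope.

Definition k : fieldType := {fraction {mpoly rat[4]}}.

(* the indeterminate a_(i+1) in k, i : 'I_4 *)
Definition a (i : 'I_4) : k := tofrac ('X_i : {mpoly rat[4]}).

Definition P : {poly k} :=
  'X^4 + (a 0)%:P * 'X^3 + (a 1)%:P * 'X^2 + (a 2)%:P * 'X + (a 3)%:P.

Definition Q : {poly k} := (P^`() ^+ 2) %% P.

Definition root_candidates (L : fieldType) (x : 'I_4 -> L) : seq L :=
  [:: (x 0 * x 1 - x 2 * x 3) / (x 0 + x 1 - x 2 - x 3);
      (x 0 * x 2 - x 1 * x 3) / (x 0 + x 2 - x 1 - x 3);
      (x 0 * x 3 - x 1 * x 2) / (x 0 + x 3 - x 1 - x 2)].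

(* Main.v *)
Require Import Defs.
From HB Require Import structures.
From mathcomp Require Import all_boot all_algebra.
From mathcomp Require Import fraction mpoly.
From mathcomp Require Import ring.
Import GRing.Theory.
Local Open Scope ring_scope.

Lemma prod4 (L : fieldType) (x : 'I_4 -> L) :
  \prod_(i < 4) ('X - (x i)%:P) =
  ('X - (x 0)%:P) * ('X - (x 1)%:P) * ('X - (x 2)%:P) * ('X - (x 3)%:P).
Proof. rewrite !big_ord_recr big_ord0 /=. congr (_ * _ * _ * _). all: rewrite ?mul1r; congr (_ - (x _)%:P); exact/val_inj. Qed.

Lemma prodE (L : fieldType) (x0 x1 x2 x3 : L) :
  ('X - x0%:P) * ('X - x1%:P) * ('X - x2%:P) * ('X - x3%:P) =
  'X^4 - (x0 + x1 + x2 + x3)%:P * 'X^3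
  + (x0*x1 + x0*x2 + x0*x3 + x1*x2 + x1*x3 + x2*x3)%:P * 'X^2
  - (x0*x1*x2 + x0*x1*x3 + x0*x2*x3 + x1*x2*x3)%:P * 'X
  + (x0*x1*x2*x3)%:P.
Proof.
rewrite !(rmorphD, rmorphM).
ring.
Qed.
Definition Pe {L : fieldType} (e1 e2 e3 e4 : L) : {poly L} :=
  'X^4 - e1%:P*'X^3 + e2%:P*'X^2 - e3%:P*'X + e4%:P.
Definition b0 {L : fieldType} (e1 e2 e3 e4 : L) : L := e1^+3 - 4*e1*e2 + 8*e3.
Definition Re {L : fieldType} (e1 e2 e3 e4 : L) : {poly L} :=
  Poly [:: e3^+2 - e1^+2*e4; -4*e2*e3 + 8*e1*e4 + e1^+2*e3;
           -2*e1*e3 + 4*e2^+2 - 16*e4 - e1^+2*e2; b0 e1 e2 e3 e4].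

Lemma division {L : fieldType} (e1 e2 e3 e4 : L) :
  ((Pe e1 e2 e3 e4)^`())^+2 %% Pe e1 e2 e3 e4 = Re e1 e2 e3 e4.
Proof.
have -> : ((Pe e1 e2 e3 e4)^`())^+2 =
   ('X^2 *+ 16 - (e1%:P * 'X) *+ 8 + (e1^+2)%:P) * Pe e1 e2 e3 e4 + Re e1 e2 e3 e4.
  rewrite /Pe /Re /b0 /= !cons_poly_def mul0r add0r.
  rewrite !derivE.
  ring.
rewrite modp_addl_mul_small //.
have hr : Pe e1 e2 e3 e4 = 'X^4 + Poly [:: e4; -e3; e2; -e1].
  rewrite /Pe /= !cons_poly_def mul0r add0r; ring.
rewrite hr size_addl size_polyXn.
  exact: leq_ltn_trans (size_Poly _) _.
exact: leq_ltn_trans (size_Poly _) _.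
Qed.
Definition pp : {mpoly rat[4]} := - ('X_0)^+3 + ('X_0 * 'X_1) *+ 4 - 'X_2 *+ 8.
Lemma tfp : tofrac pp = - (a 0)^+3 + (a 0 * a 1) *+ 4 - a 2 *+ 8.
Proof. rewrite /pp rmorphB rmorphD rmorphN rmorphXn !rmorphMn rmorphM. done. Qed.
Lemma pp_neq0 : pp != 0.
Proof.
apply/negP => /eqP /(congr1 (meval (fun i : 'I_4 => if i == 2 :> nat then 1 else 0 : rat))).
rewrite /pp mevalB mevalD mevalN !(rmorphXn, mevalMn) mevalM !mevalXU /=. rewrite mevalXU /= => /eqP; rewrite expr0n mul0r mul0rn oppr0 !add0r meval0 oppr_eq0. by []. Qed.

Theorem proposition2 (L : closedFieldType) (f : {rmorphism k -> L})
    (x : 'I_4 -> L) :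
  map_poly f P = \prod_(i < 4) ('X - (x i)%:P) ->
  map_poly f Q = f (Q`_3) *: \prod_(r <- root_candidates x) ('X - r%:P).
Proof.
move=> hP.
pose E1 := x 0 + x 1 + x 2 + x 3.
pose E2 := x 0 * x 1 + x 0 * x 2 + x 0 * x 3 + x 1 * x 2 + x 1 * x 3 + x 2 * x 3.
pose E3 := x 0 * x 1 * x 2 + x 0 * x 1 * x 3 + x 0 * x 2 * x 3 + x 1 * x 2 * x 3.
pose E4 := x 0 * x 1 * x 2 * x 3.
have hPe : map_poly f P = Pe E1 E2 E3 E4 by rewrite hP prod4 prodE.
have hQ : map_poly f Q = Re E1 E2 E3 E4.
  by rewrite /Q map_modp rmorphXn /= -deriv_map hPe division.
have c3 := congr1 (fun p : {poly L} => p`_3) hPe.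
have c2 := congr1 (fun p : {poly L} => p`_2) hPe.
have c1 := congr1 (fun p : {poly L} => p`_1) hPe.
move: c3 c2 c1; rewrite /= !coef_map /P /Pe !coefE /=.
rewrite !(mulr0, mulr1, addr0, add0r, sub0r, subr0) => h0 h1 h2.
have hb : b0 E1 E2 E3 E4 != 0.
  have -> : b0 E1 E2 E3 E4 = f (tofrac pp).
    rewrite tfp !(rmorphB, rmorphD, rmorphN, rmorphXn, rmorphMn, rmorphM) h0 h1 h2 /b0; ring.
  by rewrite fmorph_eq0 tofrac_eq0 pp_neq0.
rewrite -coef_map !hQ /root_candidates !big_cons big_nil mulr1.
have -> : (Re E1 E2 E3 E4)`_3 = b0 E1 E2 E3 E4 by rewrite /Re coef_Poly.
have hD : b0 E1 E2 E3 E4 = (x 0 + x 1 - x 2 - x 3) * (x 0 + x 2 - x 1 - x 3)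
                           * (x 0 + x 3 - x 1 - x 2).
  rewrite /b0 /E1 /E2 /E3; ring.
move: hb; rewrite hD !mulf_eq0 !negb_or => /andP [/andP [hd1 hd2] hd3].
have key : forall d n : L, d != 0 -> d%:P * ('X - (n / d)%:P) = d%:P * 'X - n%:P.
  move=> d n hd; rewrite mulrBr -polyCM; congr (_ - _%:P); by rewrite mulrC divfK.
rewrite -mul_polyC.
set d1 := x 0 + x 1 - x 2 - x 3.
set d2 := x 0 + x 2 - x 1 - x 3.
set d3 := x 0 + x 3 - x 1 - x 2.
set n1 := x 0 * x 1 - x 2 * x 3.
set n2 := x 0 * x 2 - x 1 * x 3.
set n3 := x 0 * x 3 - x 1 * x 2.
have -> : (d1 * d2 * d3)%:P * (('X - (n1 / d1)%:P) * (('X - (n2 / d2)%:P) * ('X - (n3 / d3)%:P)))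
   = (d1%:P * ('X - (n1 / d1)%:P)) * (d2%:P * ('X - (n2 / d2)%:P)) * (d3%:P * ('X - (n3 / d3)%:P)).
  rewrite !polyCM; ring.
rewrite !key //.
rewrite /Re /b0 /= !cons_poly_def mul0r add0r /E1 /E2 /E3 /E4 /d1 /d2 /d3 /n1 /n2 /n3.
ring.
Qed.
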